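(* Let $S$ be a polyhedron in $\mathbb{R}^{n+m}$ with points written $(x,y)$, $x\in\mathbb{R}^n$, $y\in\mathbb{R}^m$, and let $j,k\in\{1,\dots,m\}$. Suppose that every $(x,y)\in\operatorname{vert}(S)\cup\operatorname{vert}\bigl(S\cap\{(x,y)\mid y_j=y_k\}\bigr)$ satisfies $y\in\mathbb{Z}^m$. Let $\hat S=\{(x,y,\delta)\in S\times\mathbb{R}\mid y_j\le\delta\le y_k\}$ and assume $\hat S\neq\emptyset$. Then $\operatorname{proj}_{(y,\delta)}\bigl(\operatorname{vert}(\hat S)\bigr)\subseteq\mathbb{Z}^{m+1}$.
   Context: $\operatorname{vert}(S)$ denotes the set of extreme points of $S$, and $\operatorname{proj}_{(y,\delta)}$ is the projection onto the $(y,\delta)$ coordinates. *)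

(* Defs.v *)
From HB Require Import structures.
From mathcomp Require Import all_boot all_order all_algebra.
From mathcomp Require Import reals.
Set Implicit Arguments. Unset Strict Implicit. Unset Printing Implicit Defensive.
Import Order.TTheory GRing.Theory Num.Theory.
Local Open Scope ring_scope.

Definition is_polyhedron (R : realType) (d : nat) (S : 'cV[R]_d -> Prop) : Prop :=
  exists (p : nat) (A : 'M[R]_(p, d)) (b : 'cV[R]_p),
    forall z, S z <-> (forall i : 'I_p, (A *m z) i 0 <= b i 0).

Definition is_vertex (R : realType) (d : nat) (S : 'cV[R]_d -> Prop) (z : 'cV[R]_d) : Prop :=
  S z /\ forall (u v : 'cV[R]_d) (t : R), S u -> S v -> 0 < t -> t < 1 ->
    z = t *: u + (1 - t) *: v -> u = v.

Definition ycoord (R : realType) (n m : nat) (w : 'cV[R]_(n + m)) (i : 'I_m) : R :=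
  w (rshift n i) 0.

Definition xy_part (R : realType) (n m : nat) (z : 'cV[R]_(n + m + 1)) : 'cV[R]_(n + m) :=
  usubmx z.
Definition delta_part (R : realType) (n m : nat) (z : 'cV[R]_(n + m + 1)) : R :=
  z (rshift (n + m) (ord0 : 'I_1)) 0.

Definition Shat (R : realType) (n m : nat) (S : 'cV[R]_(n + m) -> Prop) (j k : 'I_m)
  (z : 'cV[R]_(n + m + 1)) : Prop :=
  S (xy_part z) /\ ycoord (xy_part z) j <= delta_part z /\ delta_part z <= ycoord (xy_part z) k.

(* Main.v *)
Require Import Defs.
From HB Require Import structures.
From mathcomp Require Import all_boot all_order all_algebra.
From mathcomp Require Import reals.
From mathcomp Require Import ring lra.
Import Order.TTheory GRing.Theory Num.Theory.
Local Open Scope ring_scope.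
Set Implicit Arguments. Unset Strict Implicit.

Section Aux.
Variables (R : realType) (n m : nat).
Local Notation V := 'cV[R]_(n + m).

Definition Zp (w : V) (d : R) : 'cV[R]_(n + m + 1) := col_mx w (const_mx d).

Lemma xy_Zp w d : xy_part (Zp w d) = w.
Proof. by rewrite /xy_part /Zp col_mxKu. Qed.

Lemma delta_Zp w d : delta_part (Zp w d) = d.
Proof. by rewrite /delta_part /Zp col_mxEd mxE. Qed.

Lemma Zp_eta z : z = Zp (xy_part z) (delta_part z).
Proof.
rewrite /Zp /xy_part /delta_part -{1}(vsubmxK z); congr col_mx.
by apply/matrixP => i l; rewrite !ord1 !mxE.
Qed.

Lemma Zp_comb t w1 d1 w2 d2 :
  t *: Zp w1 d1 + (1 - t) *: Zp w2 d2 = Zp (t *: w1 + (1 - t) *: w2) (t * d1 + (1 - t) * d2).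
Proof.
rewrite /Zp !scale_col_mx add_col_mx; congr col_mx.
by apply/matrixP => i l; rewrite !mxE.
Qed.

Lemma Zp_inj w1 d1 w2 d2 : Zp w1 d1 = Zp w2 d2 -> w1 = w2 /\ d1 = d2.
Proof.
move=> h; split; first by rewrite -(xy_Zp w1 d1) h xy_Zp.
by rewrite -(delta_Zp w1 d1) h delta_Zp.
Qed.

Lemma ycoordE (u v : V) s r i : ycoord (s *: u + r *: v) i = s * ycoord u i + r * ycoord v i.
Proof. by rewrite /ycoord !mxE. Qed.

Lemma poly_convex (S : V -> Prop) : is_polyhedron S ->
  forall u v t, S u -> S v -> 0 <= t -> t <= 1 -> S (t *: u + (1 - t) *: v).
Proof.
move=> [p [A [b hS]]] u v t /hS hu /hS hv t0 t1; apply/hS => i.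
rewrite mulmxDr -!scalemxAr; set Au := A *m u; set Av := A *m v.
have -> : (t *: Au + (1 - t) *: Av) i 0 = t * Au i 0 + (1 - t) * Av i 0 by rewrite !mxE.
have h1 := hu i; have h2 := hv i.
have t2 : 0 <= 1 - t by lra.
have h1' : 0 <= b i 0 - Au i 0 by rewrite subr_ge0.
have h2' : 0 <= b i 0 - Av i 0 by rewrite subr_ge0.
have := mulr_ge0 t0 h1'; have := mulr_ge0 t2 h2'; nra.
Qed.

Lemma exists_s (g x y : R) : 0 < g -> exists s, 0 < s /\ s <= 1 /\ s * x <= g /\ s * y <= g.
Proof.
move=> g0.
have hD : 0 < g + `|x| + `|y| by have := normr_ge0 x; have := normr_ge0 y; lra.
set D := g + `|x| + `|y| in hD *.
have hs : g / D * D = g by rewrite mulfVK // gt_eqF.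
have hx := ler_norm x; have hy := ler_norm y.
have hx0 := normr_ge0 x; have hy0 := normr_ge0 y.
have sp : 0 < g / D by rewrite divr_gt0.
set s := g / D in hs sp *.
exists s; split => //.
split; last split.
- have : s * D <= 1 * D; last by rewrite ler_pM2r.
  by rewrite hs mul1r /D; lra.
- have : s * x <= s * `|x| by rewrite ler_pM2l.
  have : s * `|x| <= s * D by rewrite ler_pM2l // /D; lra.
  lra.
- have : s * y <= s * `|y| by rewrite ler_pM2l.
  have : s * `|y| <= s * D by rewrite ler_pM2l // /D; lra.
  lra.
Qed.


Lemma push (S : V -> Prop) (j k : 'I_m) (z : 'cV[R]_(n + m + 1)) (P : V -> Prop) (c : 'I_m) :
  is_polyhedron S -> is_vertex (Shat S j k) z ->
  (forall u, P u -> S u) -> P (xy_part z) ->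
  delta_part z = ycoord (xy_part z) c ->
  (forall u v, P u -> P v -> exists s, 0 < s /\ s <= 1 /\ forall x, x = u \/ x = v ->
     ycoord (s *: x + (1 - s) *: xy_part z) j
       <= delta_part z + s * (ycoord x c - ycoord (xy_part z) c) /\
     delta_part z + s * (ycoord x c - ycoord (xy_part z) c)
       <= ycoord (s *: x + (1 - s) *: xy_part z) k) ->
  is_vertex P (xy_part z).
Proof.
move=> hS [hSz hz] PS Pw hc hs; split => // u v t Pu Pv t0 t1 hw.
have [s [s0 [s1 hx]]] := hs u v Pu Pv.
set w := xy_part z in hw hc hs hx Pw *.
set d := delta_part z in hc hs hx *.
have hz1 : forall x, x = u \/ x = v ->
  Shat S j k (Zp (s *: x + (1 - s) *: w) (d + s * (ycoord x c - ycoord w c))).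
  move=> x hxx; rewrite /Shat xy_Zp delta_Zp; split.
    apply: poly_convex => //; try lra; last exact: PS.
    by case: hxx => ->; apply: PS.
  exact: hx.
have := hz _ _ t (hz1 u (or_introl erefl)) (hz1 v (or_intror erefl)) t0 t1.
move=> H.
have E : z = t *: Zp (s *: u + (1 - s) *: w) (d + s * (ycoord u c - ycoord w c))
   + (1 - t) *: Zp (s *: v + (1 - s) *: w) (d + s * (ycoord v c - ycoord w c)).
  rewrite {1}(Zp_eta z) -/w -/d Zp_comb; congr Zp.
    apply/matrixP => i l.
    have := congr1 (fun M : V => M i l) hw; rewrite !mxE => e.
    transitivity (s * (t * u i l + (1 - t) * v i l) + (1 - s) * w i l).
      by rewrite !mxE -e; ring.
    rewrite !mxE; ring.
  have := congr1 (fun M : V => ycoord M c) hw; rewrite ycoordE => e.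
  rewrite -/d -/w e; ring.
have [e _] := Zp_inj (H E).
by move/addIr: e; apply: scalerI; rewrite gt_eqF.
Qed.

End Aux.

Theorem lemma3p3 (R : realType) (n m : nat) (S : 'cV[R]_(n + m) -> Prop) (j k : 'I_m) :
  is_polyhedron S ->
  (forall w : 'cV[R]_(n + m),
     is_vertex S w \/ is_vertex (fun w' => S w' /\ ycoord w' j = ycoord w' k) w ->
     forall i : 'I_m, ycoord w i \is a Num.int) ->
  (exists z, Shat S j k z) ->
  forall z : 'cV[R]_(n + m + 1), is_vertex (Shat S j k) z ->
    (forall i : 'I_m, ycoord (xy_part z) i \is a Num.int) /\ delta_part z \is a Num.int.
Proof.
move=> hS hint _ z hz.
have [[hSw [hj hk]] hz2] := hz.
set w := xy_part z in hSw hj hk *.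
set d := delta_part z in hj hk *.
have hA : d = ycoord w j \/ d = ycoord w k.
  have [e1|n1] := eqVneq d (ycoord w j); first by left.
  have [e2|n2] := eqVneq d (ycoord w k); first by right.
  exfalso.
  have l1 : ycoord w j < d by rewrite lt_neqAle eq_sym n1 hj.
  have l2 : d < ycoord w k by rewrite lt_neqAle n2 hk.
  have [e [e0 [e1 e2]]] : exists e : R, 0 < e /\ e <= d - ycoord w j /\ e <= ycoord w k - d.
    have [h|h] := leP (d - ycoord w j) (ycoord w k - d).
      by exists (d - ycoord w j); split; lra.
    by exists (ycoord w k - d); split; lra.
  have h1 : Shat S j k (Zp w (d + e)) by rewrite /Shat xy_Zp delta_Zp; split => //; lra.
  have h2 : Shat S j k (Zp w (d - e)) by rewrite /Shat xy_Zp delta_Zp; split => //; lra.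
  have E : z = 2^-1 *: Zp w (d + e) + (1 - 2^-1) *: Zp w (d - e).
    rewrite {1}(Zp_eta z) -/w -/d Zp_comb; congr Zp.
      by rewrite -scalerDl addrC subrK scale1r.
    by field; rewrite ?pnatr_eq0.
  have i0 : 0 < 2^-1 :> R by rewrite invr_gt0.
  have i1 : 2^-1 < 1 :> R by rewrite invf_lt1 // ltr1n.
  have := hz2 _ _ _ h1 h2 i0 i1 E.
  move/(Zp_inj) => [_]; lra.
have [ejk|njk] := eqVneq (ycoord w j) (ycoord w k).
  have ejk' : ycoord w j = ycoord w k :> R := ejk.
  have dj : d = ycoord w j by lra.
  have hv : is_vertex (fun w' => S w' /\ ycoord w' j = ycoord w' k) w.
    apply: (@push R n m S j k z _ j hS hz) => //.
    - by move=> u [].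
    - move=> u v [_ hu] [_ hv]; exists 1; split; first lra; split; first lra.
      move=> x [] ->; rewrite !ycoordE -/d; split; nra.
  have hy := hint w (or_intror hv); split => //.
  by rewrite dj; apply: hy.
have ljk : ycoord w j < ycoord w k by rewrite lt_neqAle njk (le_trans hj hk).
have hv : is_vertex S w.
  have key : forall c, d = ycoord w c -> (c = j \/ c = k) -> is_vertex S w.
    move=> c dc hc.
    apply: (@push R n m S j k z _ c hS hz) => //.
    move=> u v _ _.
    have [s [s0 [s1 [su sv]]]] := exists_s
      ((ycoord u j - ycoord w j) - (ycoord u k - ycoord w k))
      ((ycoord v j - ycoord w j) - (ycoord v k - ycoord w k)) (ltac:(lra) : 0 < ycoord w k - ycoord w j).
    exists s; split => //; split => //.
    move=> x hx; rewrite !ycoordE.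
    have sx : s * ((ycoord x j - ycoord w j) - (ycoord x k - ycoord w k)) <= ycoord w k - ycoord w j.
      by case: hx => ->.
    by case: hc => ?; subst c; rewrite -/d; split; nra.
  by case: hA => h; apply: (key _ h); [left|right].
have hy := hint w (or_introl hv); split => //.
by case: hA => ->; apply: hy.
Qed.
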